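(* For every $X\in\{\mathsf{T},\mathsf{S}\}^*$, the sequence $X\mathsf{T}$ is not minimal in $\{\mathsf{T},\mathsf{S}\}^*$; that is, there exists $Y\in\{\mathsf{T},\mathsf{S}\}^*$ with $Y\sqsubseteq X\mathsf{T}$ and $Y\not\equiv X\mathsf{T}$.
   Context: Fix attribute–taxonomy pairs $A_1{:}T_1,\dots,A_d{:}T_d$ with distinct attribute names, where each taxonomy $T_i=(V_i,\le_{V_i})$ is a poset (taxonomies may be chosen as needed). A t-tuple over a t-schema $S\subseteq\{A_1{:}T_1,\dots,A_d{:}T_d\}$ maps each $A_i$ in $S$ to a value of $V_i$; $\mathcal{D}$ is the set of all t-tuples over all such t-schemas. A preference relation is a binary relation $\succeq$ on $\mathcal{D}$. Preferences are given by a formula $F(x,y)=\bigvee_i P_i(x,y)$, a disjunction of statements; each statement $P_i$ is a disjunction of clauses, each clause a satisfiable conjunction of atoms of the forms $x[A_i]\le_{V_i} v$, $x[A_i]\not\le_{V_i} v$, $y[A_i]\le_{V_i} v$, $y[A_i]\not\le_{V_i} v$; the formula induces $t_1\succeq t_2\iff F(t_1,t_2)$. Operator $\mathsf{T}$ maps a formula to one inducing the transitive closure over $\mathcal{D}$ of the induced relation. Operator $\mathsf{S}$ (specificity-based refinement): repeat rounds; in a round, for each statement $P_i$ let $\mathrm{Impl}(P_i)$ be the set of statements $P_j$ such that $P_j(t_2,t_1)\Rightarrow P_i(t_1,t_2)$ for all $t_1,t_2\in\mathcal{D}$ but not conversely; simultaneously replace every $P_i$ with nonempty $\mathrm{Impl}(P_i)$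 by $P_i(x,y)\wedge\bigwedge_{P_j\in \mathrm{Impl}(P_i)}\neg P_j(y,x)$; stop when no $\mathrm{Impl}$ set is nonempty. After each operator, contradictory clauses and subsumed statements are removed. For $X\in\{\mathsf{T},\mathsf{S}\}^*$, $\succeq_X$ is the relation induced by applying the operators of $X$ in order to the initial formula. Containment $X\sqsubseteq Y$ means $\succeq_X\subseteq\succeq_Y$ for every initial preference formula; $X\equiv Y$ means both containments. A sequence $X$ is minimal in a set $\Sigma$ of sequences if $X\in\Sigma$ and there is no $Y\in\Sigma$ with $Y\not\equiv X$ and $Y\sqsubseteq X$. *)

(* Defs.v *)
From mathcomp Require Import all_boot.
From Stdlib Require Import List.
Import ListNotations.

Set Implicit Arguments.
Unset Strict Implicit.
Unset Printing Implicit Defensive.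

(* Attribute-taxonomy pairs A_1:T_1, ..., A_d:T_d, each T_i a poset.   *)
Record setup := Setup {
  nattr : nat;
  tval : 'I_nattr -> Type;
  tle : forall i, tval i -> tval i -> Prop;
  tle_refl : forall i (a : tval i), tle a a;
  tle_antisym : forall i (a b : tval i), tle a b -> tle b a -> a = b;
  tle_trans : forall i (a b c : tval i), tle a b -> tle b c -> tle a c
}.
Arguments tval : clear implicits.
Arguments tle {s i}.

(* A t-tuple over some t-schema S : attribute i is in S iff t i = Some _.
   The type [tuple s] is the set D of all t-tuples over all t-schemas. *)
Definition tuple (s : setup) := forall i : 'I_(nattr s), option (tval s i).

Definition rel (s : setup) := tuple s -> tuple s -> Prop.

Inductive var := vx | vy.

Inductive atom (s : setup) :=
| ALe  : var -> forall i : 'I_(nattr s), tval s i -> atom s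
| ANle : var -> forall i : 'I_(nattr s), tval s i -> atom s.

Definition clause (s : setup) := list (atom s).
Definition statement (s : setup) := list (clause s).
Definition formula (s : setup) := list (statement s).

Definition pick (s : setup) (v : var) (x y : tuple s) := match v with vx => x | vy => y end.

Definition atom_sem (s : setup) (a : atom s) (x y : tuple s) : Prop :=
  match a with
  | ALe w i v => match pick w x y i with Some u => tle u v | None => False end
  | ANle w i v => match pick w x y i with Some u => ~ tle u v | None => False end
  end.

Definition clause_sem (s : setup) (c : clause s) : rel s :=
  fun x y => forall a, In a c -> atom_sem a x y.

Definition statement_sem (s : setup) (p : statement s) : rel s :=
  fun x y => exists c, In c p /\ clause_sem c x y.

Definition clause_satisfiable (s : setup) (c : clause s) : Prop :=
  exists x y, clause_sem c x y.

Definition wf_formula (s : setup) (f : formula s) : Prop :=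
  forall p c, In p f -> In c p -> clause_satisfiable c.

(* A formula is represented by the set of (the relations denoted by) its
   statements; it induces the union of these relations. *)
Definition fset (s : setup) := rel s -> Prop.

Definition formula_set (s : setup) (f : formula s) : fset s :=
  fun P => exists p, In p f /\ P = statement_sem p.

Definition induced (s : setup) (F : fset s) : rel s :=
  fun x y => exists P, F P /\ P x y.

Definition subrel (s : setup) (P Q : rel s) : Prop := forall x y, P x y -> Q x y.

Definition nonempty_rel (s : setup) (P : rel s) : Prop := exists x y, P x y.

(* removal of contradictory clauses (statements that became empty) and of
   statements strictly subsumed by another statement *)
Definition normalize (s : setup) (F : fset s) : fset s :=
  fun P => F P /\ nonempty_rel P /\
           ~ (exists Q, F Q /\ subrel P Q /\ ~ subrel Q P).

Fixpoint compose_list (s : setup) (l : list (rel s)) : rel s :=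
  match l with
  | [] => fun _ _ => False
  | [P] => P
  | P :: l' => fun x y => exists z, P x z /\ compose_list l' z y
  end.

(* the statements of T(F) are all compositions P_{i1} o ... o P_{ik}
   (k >= 1) of statements of F; they induce the transitive closure *)
Definition opT (s : setup) (F : fset s) : fset s :=
  normalize (fun P => exists l, l <> [] /\ Forall F l /\ P = compose_list l).

Definition Impl (s : setup) (F : fset s) (Pi Pj : rel s) : Prop :=
  F Pj /\ (forall t1 t2, Pj t2 t1 -> Pi t1 t2) /\
  ~ (forall t1 t2, Pi t1 t2 -> Pj t2 t1).

Definition S_round (s : setup) (F : fset s) : fset s :=
  fun Q => nonempty_rel Q /\
    exists P, F P /\ Q = (fun x y => P x y /\ forall Pj, Impl F P Pj -> ~ Pj y x).

Definition S_stable (s : setup) (F : fset s) : Prop :=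
  forall P Pj, F P -> ~ Impl F P Pj.

Definition opS (s : setup) (F G : fset s) : Prop :=
  exists n, S_stable (Nat.iter n (@S_round s) F) /\
    (forall m, m < n -> ~ S_stable (Nat.iter m (@S_round s) F)) /\
    G = normalize (Nat.iter n (@S_round s) F).

Inductive op := OpT | OpS.

Inductive Apply (s : setup) : list op -> fset s -> fset s -> Prop :=
| Apply_nil F : Apply [] F F
| Apply_T X F G : Apply X (opT F) G -> Apply (OpT :: X) F G
| Apply_S X F F' G : opS F F' -> Apply X F' G -> Apply (OpS :: X) F G.

Definition contained (X Y : list op) : Prop :=
  forall (s : setup) (f : formula s), wf_formula f ->
  forall GX GY, Apply X (formula_set f) GX -> Apply Y (formula_set f) GY ->
  forall x y, induced GX x y -> induced GY x y.

Definition op_equiv (X Y : list op) : Prop := contained X Y /\ contained Y X.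

Definition minimal_in (Sigma : list op -> Prop) (X : list op) : Prop :=
  Sigma X /\ ~ (exists Y, Sigma Y /\ ~ op_equiv Y X /\ contained Y X).

(* Main.v *)
Require Import Defs.
From mathcomp Require Import all_boot.
From Stdlib Require Import List.
Import ListNotations.
From Stdlib Require Import FunctionalExtensionality PropExtensionality Bool.

Inductive V3 := v0 | v1 | v2.
Definition V3eqb (a b : V3) : bool :=
  match a, b with v0, v0 | v1, v1 | v2, v2 => true | _, _ => false end.
Lemma V3eqb_eq a b : V3eqb a b = true <-> a = b.
Proof. destruct a, b; simpl; split; intro H; congruence. Qed.

Definition allV := [v0; v1; v2].
Definition allP : list (V3 * V3) :=
  [(v0,v0);(v0,v1);(v0,v2);(v1,v0);(v1,v1);(v1,v2);(v2,v0);(v2,v1);(v2,v2)].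
Definition code (a b : V3) : nat :=
  match a, b with
  | v0,v0 => 0 | v0,v1 => 1 | v0,v2 => 2 | v1,v0 => 3 | v1,v1 => 4
  | v1,v2 => 5 | v2,v0 => 6 | v2,v1 => 7 | v2,v2 => 8 end.
Definition mask := list bool.
Definition build (f : V3 -> V3 -> bool) : mask :=
  List.map (fun p => f (fst p) (snd p)) allP.
Definition bm (m : mask) a b := nth (code a b) m false.
Lemma bm_build f a b : bm (build f) a b = f a b.
Proof. destruct a, b; reflexivity. Qed.

Lemma allP_forall (h : V3 -> V3 -> bool) :
  (forall a b, h a b = true) <-> List.forallb (fun p => h (fst p) (snd p)) allP = true.
Proof.
  split; intro H.
  - simpl; rewrite !H; reflexivity.
  - simpl in H. repeat rewrite andb_true_iff in H.
    intros a b; destruct a, b; tauto.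
Qed.

Lemma allP_exists (h : V3 -> V3 -> bool) :
  (exists a b, h a b = true) <-> List.existsb (fun p => h (fst p) (snd p)) allP = true.
Proof.
  split; intro H.
  - destruct H as [a [b H]]. apply existsb_exists. exists (a, b).
    split; [destruct a, b; simpl; tauto | exact H].
  - apply existsb_exists in H. destruct H as [[a b] [_ H]]. exists a, b. exact H.
Qed.

Lemma allV_exists (h : V3 -> bool) :
  (exists c, h c = true) <-> List.existsb h allV = true.
Proof.
  split; intro H.
  - destruct H as [c H]. apply existsb_exists. exists c.
    split; [destruct c; simpl; tauto | exact H].
  - apply existsb_exists in H. destruct H as [c [_ H]]. exists c. exact H.
Qed.

Definition V3le (i : 'I_1) (a b : V3) : Prop := a = b.
Lemma V3le_refl i (a : V3) : V3le i a a. Proof. reflexivity. Qed.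
Lemma V3le_antisym i (a b : V3) : V3le i a b -> V3le i b a -> a = b.
Proof. intros H _; exact H. Qed.
Lemma V3le_trans i (a b c : V3) : V3le i a b -> V3le i b c -> V3le i a c.
Proof. unfold V3le; intros; congruence. Qed.

Definition s0 : setup :=
  @Setup 1 (fun _ => V3) V3le V3le_refl V3le_antisym V3le_trans.

Definition o0 : 'I_1 := ord0.
Definition tup (a : V3) : Defs.tuple s0 := fun _ => Some a.

Definition Rf (f : V3 -> V3 -> bool) : Defs.rel s0 := fun x y =>
  match x o0, y o0 with Some a, Some b => f a b = true | _, _ => False end.
Definition R (m : mask) : Defs.rel s0 := Rf (bm m).

Lemma Rf_ext f g : (forall a b, f a b = g a b) -> Rf f = Rf g.
Proof.
  intro H. apply functional_extensionality; intro x.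
  apply functional_extensionality; intro y. unfold Rf.
  destruct (x o0), (y o0); try reflexivity. rewrite H; reflexivity.
Qed.

Lemma Rf_sub f g : (forall x y, Rf f x y -> Rf g x y) <->
  List.forallb (fun p => implb (f (fst p) (snd p)) (g (fst p) (snd p))) allP = true.
Proof.
  rewrite <- (allP_forall (fun a b => implb (f a b) (g a b))).
  split; intro H.
  - intros a b. destruct (f a b) eqn:E; [|reflexivity]. simpl.
    exact (H (tup a) (tup b) E).
  - intros x y. unfold Rf. destruct (x o0) as [a|], (y o0) as [b|]; auto.
    intro E. specialize (H a b). rewrite E in H. exact H.
Qed.

Definition revsub (f g : V3 -> V3 -> bool) : bool :=
  List.forallb (fun p => implb (f (fst p) (snd p)) (g (snd p) (fst p))) allP.

Lemma revsub_ok f g : (forall x y, Rf f x y -> Rf g y x) <-> revsub f g = true.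
Proof.
  unfold revsub.
  rewrite <- (allP_forall (fun a b => implb (f a b) (g b a))).
  split; intro H.
  - intros a b. destruct (f a b) eqn:E; [|reflexivity]. simpl.
    exact (H (tup a) (tup b) E).
  - intros x y. unfold Rf. destruct (x o0) as [a|], (y o0) as [b|]; auto.
    intro E. specialize (H a b). rewrite E in H. exact H.
Qed.

Definition comp (m1 m2 : mask) : mask :=
  build (fun a b => List.existsb (fun c => bm m1 a c && bm m2 c b) allV).

Lemma R_comp m1 m2 : (fun x y => exists z, R m1 x z /\ R m2 z y) = R (comp m1 m2).
Proof.
  apply functional_extensionality; intro x.
  apply functional_extensionality; intro y.
  apply propositional_extensionality.
  unfold R, comp. rewrite (Rf_ext _ _ (bm_build _)). unfold Rf. split.
  - intros [z [H1 H2]].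
    destruct (x o0) as [a|]; [|contradiction].
    destruct (z o0) as [c|]; [|contradiction].
    destruct (y o0) as [b|]; [|contradiction].
    apply allV_exists. exists c. rewrite H1 H2. reflexivity.
  - destruct (x o0) as [a|]; [|contradiction].
    destruct (y o0) as [b|]; [|contradiction].
    intro H. apply allV_exists in H. destruct H as [c H].
    apply andb_true_iff in H. destruct H as [H1 H2].
    exists (tup c). simpl. tauto.
Qed.

Definition sub (m1 m2 : mask) : bool :=
  List.forallb (fun p => implb (bm m1 (fst p) (snd p)) (bm m2 (fst p) (snd p))) allP.
Lemma sub_ok m1 m2 : Defs.subrel (R m1) (R m2) <-> sub m1 m2 = true.
Proof. unfold Defs.subrel, R, sub. apply Rf_sub. Qed.

Definition nonemp (m : mask) : bool := List.existsb (fun p => bm m (fst p) (snd p)) allP.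
Lemma nonemp_ok m : nonempty_rel (R m) <-> nonemp m = true.
Proof.
  unfold nonemp. rewrite <- (allP_exists (bm m)). unfold nonempty_rel, R, Rf. split.
  - intros [x [y H]]. destruct (x o0) as [a|], (y o0) as [b|]; try contradiction.
    exists a, b; exact H.
  - intros [a [b H]]. exists (tup a), (tup b). exact H.
Qed.

Fixpoint leqb (l1 l2 : list bool) : bool :=
  match l1, l2 with
  | [], [] => true
  | a :: r, b :: t => Bool.eqb a b && leqb r t
  | _, _ => false end.
Lemma leqb_eq l1 l2 : leqb l1 l2 = true -> l1 = l2.
Proof.
  revert l2; induction l1 as [|a r IH]; intros [|b t]; simpl; try discriminate; auto.
  intro H. apply andb_true_iff in H. destruct H as [H1 H2].
  apply eqb_prop in H1. rewrite H1 (IH _ H2). reflexivity.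
Qed.
Definition inb (m : mask) (L : list mask) := List.existsb (leqb m) L.
Lemma inb_In m L : inb m L = true -> In m L.
Proof.
  unfold inb. intro H. apply existsb_exists in H. destruct H as [m' [H1 H2]].
  apply leqb_eq in H2. subst. exact H1.
Qed.

Definition fs (L : list mask) : fset s0 := fun P => exists m, In m L /\ P = R m.

Definition seteqb (L1 L2 : list mask) :=
  List.forallb (fun m => inb m L2) L1 && List.forallb (fun m => inb m L1) L2.
Lemma seteqb_ok L1 L2 : seteqb L1 L2 = true -> fs L1 = fs L2.
Proof.
  unfold seteqb; intro H. apply andb_true_iff in H. destruct H as [H1 H2].
  rewrite forallb_forall in H1. rewrite forallb_forall in H2.
  apply functional_extensionality; intro P. apply propositional_extensionality.
  unfold fs; split; intros [m [Hm ->]]; exists m; split; auto; apply inb_In; auto.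
Qed.

Definition normL (C : list mask) : list mask :=
  List.filter (fun m => nonemp m &&
     negb (List.existsb (fun m' => sub m m' && negb (sub m' m)) C)) C.

Lemma norm_ok L : normalize (fs L) = fs (normL L).
Proof.
  apply functional_extensionality; intro P. apply propositional_extensionality.
  unfold normalize, fs, normL. split.
  - intros [[m [Hm ->]] [Hne Hno]]. exists m. split; [|reflexivity].
    apply filter_In. split; [exact Hm|].
    apply andb_true_iff. split; [apply nonemp_ok; exact Hne|].
    apply negb_true_iff. destruct (List.existsb _ L) eqn:E; [|reflexivity].
    exfalso. apply Hno. apply existsb_exists in E. destruct E as [m' [Hm' E]].
    apply andb_true_iff in E. destruct E as [E1 E2]. apply negb_true_iff in E2.
    exists (R m'). split; [exists m'; split; auto|].
    split; [apply sub_ok; exact E1|]. intro H. apply sub_ok in H. congruence.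
  - intros [m [Hm ->]]. apply filter_In in Hm. destruct Hm as [Hm E].
    apply andb_true_iff in E. destruct E as [E1 E2]. apply negb_true_iff in E2.
    split; [exists m; split; auto|]. split; [apply nonemp_ok; exact E1|].
    intros [Q [[m' [Hm' ->]] [H1 H2]]].
    assert (E3 : List.existsb (fun m' => sub m m' && negb (sub m' m)) L = true).
    { apply existsb_exists. exists m'. split; [exact Hm'|].
      apply andb_true_iff. split; [apply sub_ok; exact H1|].
      apply negb_true_iff. destruct (sub m' m) eqn:E; [|reflexivity].
      exfalso; apply H2; apply sub_ok; exact E. }
    congruence.
Qed.

Fixpoint undupm (L : list mask) : list mask :=
  match L with [] => [] | m :: r => if inb m r then undupm r else m :: undupm r end.
Lemma undupm_In m L : In m (undupm L) -> In m L.
Proof.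
  induction L as [|a r IH]; simpl; auto.
  destruct (inb a r); simpl; intuition.
Qed.
Definition cstep (G C : list mask) : list mask :=
  undupm (C ++ List.flat_map (fun g => List.map (comp g) C) G).
Fixpoint clos (k : nat) (G : list mask) : list mask :=
  match k with 0 => G | S k' => cstep G (clos k' G) end.

Definition realized (G : list mask) (m : mask) :=
  exists l, l <> [] /\ Forall (fs G) l /\ R m = compose_list l.

Lemma compose_cons (P : Defs.rel s0) l : l <> [] ->
  compose_list (P :: l) = fun x y => exists z, P x z /\ compose_list l z y.
Proof. destruct l; [contradiction|reflexivity]. Qed.

Lemma clos_realized k G m : In m (clos k G) -> realized G m.
Proof.
  revert m; induction k as [|k IH]; intros m Hm; simpl in Hm.
  - exists [R m]. split; [discriminate|]. split; [|reflexivity].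
    constructor; [exists m; split; auto|constructor].
  - apply undupm_In in Hm. apply in_app_or in Hm. destruct Hm as [Hm|Hm]; [auto|].
    apply in_flat_map in Hm. destruct Hm as [g [Hg Hm]].
    apply in_map_iff in Hm. destruct Hm as [c [<- Hc]].
    destruct (IH c Hc) as [l [Hl [HF Heq]]].
    exists (R g :: l). split; [discriminate|]. split.
    + constructor; [exists g; split; auto|exact HF].
    + rewrite compose_cons; [|exact Hl]. rewrite <- Heq. rewrite R_comp. reflexivity.
Qed.

Definition closedb (G C : list mask) :=
  List.forallb (fun g => List.forallb (fun c => inb (comp g c) C) C) G &&
  List.forallb (fun g => inb g C) G.

Lemma closed_compose G C : closedb G C = true -> forall l, l <> [] ->
  Forall (fs G) l -> exists m, In m C /\ compose_list l = R m.
Proof.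
  unfold closedb; intro H. apply andb_true_iff in H. destruct H as [H1 H2].
  rewrite forallb_forall in H1. rewrite forallb_forall in H2.
  induction l as [|P l IH]; intros Hne HF; [contradiction|].
  inversion HF as [|? ? HP HF']; subst. destruct HP as [g [Hg ->]].
  destruct l as [|Q l'].
  - exists g. split; [apply inb_In; auto|reflexivity].
  - destruct (IH ltac:(discriminate) HF') as [c [Hc Heq]].
    exists (comp g c). split.
    + apply inb_In. specialize (H1 g Hg). rewrite forallb_forall in H1. auto.
    + rewrite compose_cons; [|discriminate]. rewrite Heq. apply R_comp.
Qed.

Lemma opT_fs G k : closedb G (clos k G) = true ->
  opT (fs G) = fs (normL (clos k G)).
Proof.
  intro Hc. unfold opT. rewrite <- norm_ok. f_equal.
  apply functional_extensionality; intro P. apply propositional_extensionality.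
  split.
  - intros [l [Hl [HF ->]]]. destruct (closed_compose _ _ Hc l Hl HF) as [m [Hm Heq]].
    exists m; split; auto.
  - intros [m [Hm ->]]. destruct (clos_realized _ _ _ Hm) as [l [Hl [HF Heq]]].
    exists l; auto.
Qed.

Definition isimplb (mi mj : mask) : bool :=
  revsub (bm mj) (bm mi) && negb (revsub (bm mi) (bm mj)).

Lemma Impl_of L mi mj : In mj L -> isimplb mi mj = true -> Impl (fs L) (R mi) (R mj).
Proof.
  intros Hin H. unfold isimplb in H. apply andb_true_iff in H. destruct H as [H1 H2].
  apply negb_true_iff in H2. split; [exists mj; split; auto|]. split.
  - intros t1 t2 H. exact (proj2 (revsub_ok _ _) H1 t2 t1 H).
  - intro H. assert (revsub (bm mi) (bm mj) = true) by (apply revsub_ok; exact H).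
    congruence.
Qed.

Lemma Impl_to L mi Pj : Impl (fs L) (R mi) Pj ->
  exists mj, In mj L /\ Pj = R mj /\ isimplb mi mj = true.
Proof.
  intros [[mj [Hin ->]] [H1 H2]]. exists mj. split; auto. split; auto.
  unfold isimplb. apply andb_true_iff. split.
  - apply revsub_ok. intros x y H. exact (H1 y x H).
  - apply negb_true_iff. destruct (revsub (bm mi) (bm mj)) eqn:E; [|reflexivity].
    exfalso. apply H2. apply revsub_ok. exact E.
Qed.

Definition newm (L : list mask) (mi : mask) : mask :=
  build (fun a b => bm mi a b &&
     List.forallb (fun mj => negb (isimplb mi mj) || negb (bm mj b a)) L).

Lemma newm_ok L mi :
  (fun x y => R mi x y /\ forall Pj, Impl (fs L) (R mi) Pj -> ~ Pj y x) = R (newm L mi).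
Proof.
  apply functional_extensionality; intro x.
  apply functional_extensionality; intro y.
  apply propositional_extensionality.
  unfold newm. unfold R at 3. rewrite (Rf_ext _ _ (bm_build _)).
  split.
  - intros [H1 H2]. unfold R, Rf in H1 |- *.
    destruct (x o0) as [a|] eqn:Ex; [|contradiction].
    destruct (y o0) as [b|] eqn:Ey; [|contradiction].
    rewrite H1. simpl. apply forallb_forall. intros mj Hmj.
    destruct (isimplb mi mj) eqn:Ei; [|reflexivity]. simpl.
    apply negb_true_iff. destruct (bm mj b a) eqn:Eb; [|reflexivity].
    exfalso. apply (H2 (R mj) (Impl_of _ _ _ Hmj Ei)).
    unfold R, Rf. rewrite Ey Ex. exact Eb.
  - unfold Rf at 1. destruct (x o0) as [a|] eqn:Ex; [|contradiction].
    destruct (y o0) as [b|] eqn:Ey; [|contradiction].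
    intro H. apply andb_true_iff in H. destruct H as [H1 H2]. split.
    + unfold R, Rf. rewrite Ex Ey. exact H1.
    + intros Pj HI. destruct (Impl_to _ _ _ HI) as [mj [Hin [-> Ei]]].
      rewrite forallb_forall in H2. specialize (H2 mj Hin). rewrite Ei in H2.
      simpl in H2. apply negb_true_iff in H2.
      unfold R, Rf. rewrite Ey Ex. congruence.
Qed.

Definition sround (L : list mask) : list mask := List.filter nonemp (List.map (newm L) L).

Lemma sround_ok L : S_round (fs L) = fs (sround L).
Proof.
  apply functional_extensionality; intro Q. apply propositional_extensionality.
  unfold S_round, fs, sround. split.
  - intros [Hne [P [[mi [Hin ->]] ->]]]. rewrite newm_ok in Hne |- *.
    exists (newm L mi). split; [|reflexivity]. apply filter_In. split.
    + apply in_map. exact Hin.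
    + apply nonemp_ok. exact Hne.
  - intros [m [Hm ->]]. apply filter_In in Hm. destruct Hm as [Hm Hne].
    apply in_map_iff in Hm. destruct Hm as [mi [<- Hin]].
    split; [apply nonemp_ok; exact Hne|].
    exists (R mi). split; [exists mi; split; auto|]. symmetry. apply newm_ok.
Qed.

Definition stableb (L : list mask) : bool :=
  negb (List.existsb (fun mi => List.existsb (isimplb mi) L) L).

Lemma stable_true L : stableb L = true -> S_stable (fs L).
Proof.
  unfold stableb. intros H P Pj [mi [Hin ->]] HI.
  destruct (Impl_to _ _ _ HI) as [mj [Hj [_ Ei]]].
  assert (List.existsb (fun mi => List.existsb (isimplb mi) L) L = true).
  { apply existsb_exists. exists mi. split; auto. apply existsb_exists. exists mj. auto. }
  rewrite H0 in H. discriminate.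
Qed.

Lemma stable_false L : stableb L = false -> ~ S_stable (fs L).
Proof.
  unfold stableb. intros H HS. apply negb_false_iff in H.
  apply existsb_exists in H. destruct H as [mi [Hi H]].
  apply existsb_exists in H. destruct H as [mj [Hj E]].
  apply (HS (R mi) (R mj)); [exists mi; split; auto|]. apply Impl_of; auto.
Qed.

Lemma iter_fs k L : Nat.iter k (@S_round s0) (fs L) = fs (Nat.iter k sround L).
Proof.
  induction k as [|k IH]; [reflexivity|]. simpl. rewrite IH. apply sround_ok.
Qed.

Lemma opS0 L : stableb L = true -> opS (fs L) (fs (normL L)).
Proof.
  intro H. exists 0. split; [apply stable_true; exact H|]. split.
  - intros m Hm. rewrite ltn0 in Hm. discriminate.
  - simpl. symmetry. apply norm_ok.
Qed.

Lemma opS1 L : stableb L = false -> stableb (sround L) = true ->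
  opS (fs L) (fs (normL (sround L))).
Proof.
  intros H0 H1. exists 1. split.
  - rewrite (iter_fs 1). apply stable_true; exact H1.
  - split.
    + intros m Hm. destruct m as [|m]; [apply stable_false; exact H0|].
      discriminate.
    + rewrite (iter_fs 1). symmetry. apply norm_ok.
Qed.

Lemma opS_det {s : setup} (F G1 G2 : fset s) : opS F G1 -> opS F G2 -> G1 = G2.
Proof.
  intros [n1 [S1 [M1 ->]]] [n2 [S2 [M2 ->]]].
  destruct (ltngtP n1 n2) as [H|H|H].
  - exfalso. exact (M2 _ H S1).
  - exfalso. exact (M1 _ H S2).
  - subst. reflexivity.
Qed.

Lemma Apply_det {s : setup} X (F G1 G2 : fset s) :
  Apply X F G1 -> Apply X F G2 -> G1 = G2.
Proof.
  intro H1. revert G2. induction H1; intros G2 H2; inversion H2; subst; auto.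
  rewrite (opS_det _ _ _ H H3) in IHApply. auto.
Qed.

Lemma Apply_app {s : setup} X Y (F H G : fset s) :
  Apply X F H -> Apply Y H G -> Apply (X ++ Y) F G.
Proof.
  intro H1. induction H1; intro H2; simpl.
  - exact H2.
  - apply Apply_T. auto.
  - eapply Apply_S; eauto.
Qed.

Lemma Apply_app_inv {s : setup} X Y (F G : fset s) :
  Apply (X ++ Y) F G -> exists H, Apply X F H /\ Apply Y H G.
Proof.
  revert F; induction X as [|o X IH]; intros F HA; simpl in HA.
  - exists F. split; [constructor|exact HA].
  - inversion HA; subst.
    + destruct (IH _ H3) as [H [A1 A2]]. exists H. split; [constructor; auto|auto].
    + destruct (IH _ H4) as [H [A1 A2]]. exists H. split; [eapply Apply_S; eauto|auto].
Qed.

Lemma opS_sub {s : setup} (F G : fset s) x y : opS F G -> induced G x y -> induced F x y.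
Proof.
  intros [n [_ [_ ->]]]. intros [P [[HP _] HPxy]].
  revert P HP HPxy. induction n as [|n IH]; intros P HP HPxy.
  - exists P; auto.
  - simpl in HP. destruct HP as [_ [P' [HP' ->]]]. destruct HPxy as [H1 _].
    exact (IH P' HP' H1).
Qed.

Lemma contained_TS X : contained (X ++ [OpT; OpS]) (X ++ [OpT]).
Proof.
  intros s f _ GX GY HX HY x y Hxy.
  destruct (Apply_app_inv _ _ _ _ HX) as [H1 [A1 A2]].
  destruct (Apply_app_inv _ _ _ _ HY) as [H2 [B1 B2]].
  rewrite (Apply_det _ _ _ _ A1 B1) in A2.
  inversion A2; subst. match goal with h : Apply [OpS] _ _ |- _ => inversion h; subst end.
  match goal with h : Apply [] _ _ |- _ => inversion h; subst end.
  inversion B2; subst. match goal with h : Apply [] _ _ |- _ => inversion h; subst end.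
  eapply opS_sub; eauto.
Qed.

Definition mk (l : list (V3 * V3)) : mask :=
  build (fun a b => List.existsb (fun p => V3eqb (fst p) a && V3eqb (snd p) b) l).
Definition psA1 := [(v1,v2);(v2,v0);(v2,v2)].
Definition psA2 := [(v0,v1)].
Definition LA := [mk psA1; mk psA2].
Definition LB := [mk [(v1,v1);(v2,v1)]; mk [(v0,v1)]; mk [(v1,v2);(v2,v0);(v2,v2)]; mk [(v0,v0);(v0,v2)]].
Definition LC := [mk [(v1,v1);(v2,v1)]; mk [(v0,v1)]; mk [(v1,v0);(v1,v2);(v2,v0);(v2,v2)]; mk [(v0,v0);(v0,v2)]].

Definition cl (p : V3 * V3) : clause s0 := [@ALe s0 vx o0 (fst p); @ALe s0 vy o0 (snd p)].
Lemma cl_ok p x y : clause_sem (cl p) x y <-> x o0 = Some (fst p) /\ y o0 = Some (snd p).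
Proof.
  unfold clause_sem. split.
  - intro H. pose proof (H _ (or_introl (erefl _))) as h1.
    pose proof (H _ (or_intror (or_introl (erefl _)))) as h2.
    simpl in h1, h2. unfold V3le in *.
    destruct (x o0); [|contradiction]. destruct (y o0); [|contradiction].
    subst. auto.
  - intros [Hx Hy] a Ha. simpl in Ha. destruct Ha as [<-|[<-|[]]]; simpl.
    + rewrite Hx. reflexivity.
    + rewrite Hy. reflexivity.
Qed.

Definition stmt (ps : list (V3 * V3)) : statement s0 := List.map cl ps.

Lemma V3eqb_refl a : V3eqb a a = true.
Proof. destruct a; reflexivity. Qed.

Lemma stmt_ok ps : statement_sem (stmt ps) = R (mk ps).
Proof.
  apply functional_extensionality; intro x.
  apply functional_extensionality; intro y.
  apply propositional_extensionality.
  unfold statement_sem, stmt. split.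
  - intros [c [Hc Hs]]. apply in_map_iff in Hc. destruct Hc as [p [<- Hp]].
    apply cl_ok in Hs. destruct Hs as [Hx Hy].
    unfold R, Rf. rewrite Hx Hy. unfold mk. rewrite bm_build.
    apply existsb_exists. exists p. split; auto. rewrite !V3eqb_refl. reflexivity.
  - unfold R, Rf. destruct (x o0) as [a|] eqn:Ex; [|contradiction].
    destruct (y o0) as [b|] eqn:Ey; [|contradiction].
    unfold mk. rewrite bm_build. intro H. apply existsb_exists in H.
    destruct H as [[a' b'] [Hp H]]. apply andb_true_iff in H. destruct H as [H1 H2].
    apply V3eqb_eq in H1. apply V3eqb_eq in H2. simpl in H1, H2. subst.
    exists (cl (a, b)). split; [apply in_map; exact Hp|].
    apply cl_ok. simpl. auto.
Qed.

Definition f0 : formula s0 := [stmt psA1; stmt psA2].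

Lemma f0_set : formula_set f0 = fs LA.
Proof.
  apply functional_extensionality; intro P. apply propositional_extensionality.
  unfold formula_set, fs, f0, LA. split.
  - intros [p [Hp ->]]. cbn [In] in Hp. destruct Hp as [<-|[<-|[]]].
    + exists (mk psA1). split; [left; reflexivity|apply stmt_ok].
    + exists (mk psA2). split; [right; left; reflexivity|apply stmt_ok].
  - intros [m [Hm ->]]. cbn [In] in Hm. destruct Hm as [<-|[<-|[]]].
    + exists (stmt psA1). split; [left; reflexivity|symmetry; apply stmt_ok].
    + exists (stmt psA2). split; [right; left; reflexivity|symmetry; apply stmt_ok].
Qed.

Lemma f0_wf : wf_formula f0.
Proof.
  intros p c Hp Hc. unfold f0 in Hp. cbn [In] in Hp.
  assert (exists ps, p = stmt ps) as [ps ->].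
  { destruct Hp as [<-|[<-|[]]]; eauto. }
  unfold stmt in Hc. apply in_map_iff in Hc. destruct Hc as [q [<- _]].
  exists (tup (fst q)), (tup (snd q)). apply cl_ok. split; reflexivity.
Qed.

Definition st (F : fset s0) := F = fs LA \/ F = fs LB \/ F = fs LC.

Lemma T_st F : st F -> opT F = fs LC.
Proof.
  intros [HF|[HF|HF]]; subst F; (rewrite (opT_fs _ 4); [|vm_compute; reflexivity]);
  apply seteqb_ok; vm_compute; reflexivity.
Qed.

Lemma SA : opS (fs LA) (fs LA).
Proof.
  rewrite <- (seteqb_ok (normL LA) LA); [|vm_compute; reflexivity].
  apply opS0. vm_compute; reflexivity.
Qed.
Lemma SB : opS (fs LB) (fs LB).
Proof.
  rewrite <- (seteqb_ok (normL LB) LB); [|vm_compute; reflexivity].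
  apply opS0. vm_compute; reflexivity.
Qed.
Lemma SC : opS (fs LC) (fs LB).
Proof.
  rewrite <- (seteqb_ok (normL (sround LC)) LB); [|vm_compute; reflexivity].
  apply opS1; vm_compute; reflexivity.
Qed.

Lemma S_st F : st F -> exists F', opS F F' /\ st F'.
Proof.
  intros [HF|[HF|HF]]; subst F.
  - exists (fs LA). split; [exact SA|left; reflexivity].
  - exists (fs LB). split; [exact SB|right; left; reflexivity].
  - exists (fs LB). split; [exact SC|right; left; reflexivity].
Qed.

Lemma reach X : forall F, st F -> exists G, Apply X F G /\ st G.
Proof.
  induction X as [|o X IH]; intros F HF.
  - exists F. split; [constructor|exact HF].
  - destruct o.
    + destruct (IH (opT F)) as [G [HA HG]].
      { rewrite (T_st _ HF). right; right; reflexivity. }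
      exists G. split; [apply Apply_T; exact HA|exact HG].
    + destruct (S_st _ HF) as [F' [HS HF']]. destruct (IH F' HF') as [G [HA HG]].
      exists G. split; [eapply Apply_S; eauto|exact HG].
Qed.

Lemma lostC : induced (fs LC) (tup v1) (tup v0).
Proof.
  exists (R (mk [(v1,v0);(v1,v2);(v2,v0);(v2,v2)])). split.
  - exists (mk [(v1,v0);(v1,v2);(v2,v0);(v2,v2)]). split; [|reflexivity].
    unfold LC. simpl. right; right; left; reflexivity.
  - vm_compute. reflexivity.
Qed.

Lemma notB : ~ induced (fs LB) (tup v1) (tup v0).
Proof.
  intros [P [[m [Hm ->]] HP]]. unfold LB in Hm. simpl in Hm.
  destruct Hm as [<-|[<-|[<-|[<-|[]]]]]; vm_compute in HP; discriminate.
Qed.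

Theorem mainTheorem7 :
  forall X : list op,
    exists Y : list op, contained Y (X ++ [OpT]) /\ ~ op_equiv Y (X ++ [OpT]).
Proof.
  intro X. exists (X ++ [OpT; OpS]). split; [apply contained_TS|].
  intros [_ Hc].
  destruct (reach X (fs LA) (or_introl (erefl _))) as [H [AH stH]].
  rewrite <- f0_set in AH.
  assert (A1 : Apply (X ++ [OpT]) (formula_set f0) (fs LC)).
  { apply (Apply_app _ _ _ _ _ AH). apply Apply_T. rewrite (T_st _ stH). constructor. }
  assert (A2 : Apply (X ++ [OpT; OpS]) (formula_set f0) (fs LB)).
  { apply (Apply_app _ _ _ _ _ AH). apply Apply_T. rewrite (T_st _ stH).
    eapply Apply_S; [exact SC|constructor]. }
  apply notB. exact (Hc s0 f0 f0_wf _ _ A1 A2 _ _ lostC).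
Qed.
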